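(* Let $\mathcal{H}_o=(V,\vec H,\bm{w})$ be a strongly connected weighted oriented hypergraph with $|V|\ge2$, and let $w_{\max}=\max_{h\in\vec H}w_h$. (i) If $h=(A_h,B_h)\in\vec H$ is such that the limit $\kappa(h)=\lim_{\alpha\to1^-}\kappa_\alpha(h)/(1-\alpha)$ exists in $\mathbb{R}$ and $\kappa(h)>0$, then $L(h)\le\frac{2w_{\max}}{\kappa(h)}$. (ii) If there is a constant $\kappa>0$ such that $\kappa(u,v)\ge\kappa$ for every hyperedge $h\in\vec H$ and all $u\in A_h$, $v\in B_h$, then $$\mathrm{diam}(\mathcal{H}_o)\le\frac{2w_{\max}}{\kappa}.$$
   Context: A weighted oriented hypergraph $(V,\vec H,\bm w)$ has a finite vertex set $V$, a finite set $\vec H$ of hyperedges, each an ordered pair $h=(A_h,B_h)$ of nonempty subsets of $V$ with $A_h\cap B_h=\emptyset$, such that for every $h\in\vec H$ its reversal $h^-=(B_h,A_h)$ also belongs to $\vec H$, and positive weights with $w_h=w_{h^-}$. A directed path from $u$ to $v$ is a sequence of hyperedges $h_1,\dots,h_l$ with $u\in A_{h_1}$, $v\in B_{h_l}$, $B_{h_j}\cap A_{h_{j+1}}\ne\emptyset$; strongly connected means such a path exists for all distinct $u,v$. $d(u,v)=\inf_\gamma\sum_{h\in\gamma}w_h$ over directed paths from $u$ to $v$ ($u\ne v$), $d(u,u)=0$; $\mathrm{diam}(\mathcal{H}_o)=\max_{u,v}d(u,v)$; $L(h)=\min_{x\in A_h,y\in B_h}d(x,y)$. $\Gamma^{in}(v)=\{z:\exists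 h'\text{ with }v\in B_{h'},z\in A_{h'}\}$, $\Gamma^{out}(v)=\{z:\exists h'\text{ with }v\in A_{h'},z\in B_{h'}\}$, and $\Gamma(v)=\Gamma^{out}(v)$. Hyperedge measures, for $A_h=\{x_1,\dots,x_n\}$, $B_h=\{y_1,\dots,y_m\}$, $\alpha\in[0,1]$: $\mu^\alpha_{A_h}=\sum_i\mu^\alpha_{x_i}$ with $\mu^\alpha_{x_i}(x_i)=\alpha/n$, $\mu^\alpha_{x_i}(z)=(1-\alpha)\sum_{h':x_i\in B_{h'},z\in A_{h'}}\frac{1}{n|A_{h'}|}\frac{w_{h'}}{\sum_{h'':x_i\in B_{h''}}w_{h''}}$ for $z\in\Gamma^{in}(x_i)$, $0$ otherwise; $\mu^\alpha_{B_h}=\sum_j\mu^\alpha_{y_j}$ with $\mu^\alpha_{y_j}(y_j)=\alpha/m$, $\mu^\alpha_{y_j}(z)=(1-\alpha)\sum_{h':y_j\in A_{h'},z\in B_{h'}}\frac{1}{m|B_{h'}|}\frac{w_{h'}}{\sum_{h'':y_j\in A_{h''}}w_{h''}}$ for $z\in\Gamma^{out}(y_j)$, $0$ otherwise; $\kappa_\alpha(h)=1-W(\mu^\alpha_{A_h},\mu^\alpha_{B_h})/L(h)$. Vertex measures: $\mu^\alpha_{u^{in}}(u)=\alpha$, $\mu^\alpha_{u^{in}}(z)=(1-\alpha)\sum_{h':u\in B_{h'},z\in A_{h'}}\frac{1}{|A_{h'}|}\frac{w_{h'}}{\sum_{h'':u\in B_{h''}}w_{h''}}$ for $z\in\Gamma(u)$,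 $0$ otherwise; $\mu^\alpha_{v^{out}}(v)=\alpha$, $\mu^\alpha_{v^{out}}(z)=(1-\alpha)\sum_{h':v\in A_{h'},z\in B_{h'}}\frac{1}{|B_{h'}|}\frac{w_{h'}}{\sum_{h'':v\in A_{h''}}w_{h''}}$ for $z\in\Gamma(v)$, $0$ otherwise. $W(\mu,\nu)=\inf_\pi\sum_{x,y}\pi(x,y)d(x,y)$ over couplings $\pi$ of $\mu,\nu$. For distinct $u,v$: $\kappa_\alpha(u,v)=1-W(\mu^\alpha_{u^{in}},\mu^\alpha_{v^{out}})/d(u,v)$ and $\kappa(u,v)=\lim_{\alpha\to1^-}\kappa_\alpha(u,v)/(1-\alpha)$ (this limit exists in $\mathbb{R}$). *)

(* Defs.v *)
From HB Require Import structures.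
From mathcomp Require Import all_boot all_order all_algebra.
From mathcomp Require Import all_classical all_reals all_analysis.
Set Implicit Arguments. Unset Strict Implicit. Unset Printing Implicit Defensive.
Import Order.TTheory GRing.Theory Num.Theory.
Local Open Scope classical_set_scope.
Local Open Scope ring_scope.

Section WOH.
Variables (R : realType) (V : finType).

Definition hedge := ({set V} * {set V})%type.

Variables (H : {set hedge}) (w : hedge -> R).

Definition is_woh : Prop :=
  forall h, h \in H ->
    [/\ h.1 != finset.set0, h.2 != finset.set0, h.1 :&: h.2 == finset.set0 &
        [/\ (h.2, h.1) \in H, 0 < w h & w (h.2, h.1) = w h]].

Definition link (h1 h2 : hedge) : bool := h1.2 :&: h2.1 != finset.set0.

Definition is_dpath (u v : V) (p : seq hedge) : bool :=
  if p is h0 :: t then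
    [&& all (fun h => h \in H) p, u \in h0.1, v \in (last h0 t).2 & path link h0 t]
  else false.

Definition strongly_connected : Prop :=
  forall u v : V, u != v -> exists p, is_dpath u v p.

Definition dist (u v : V) : R :=
  if u == v then 0 else
  inf [set x : R | exists p, is_dpath u v p /\ x = \sum_(h <- p) w h].

Definition diam : R := \big[Num.max/0]_(uv : V * V) dist uv.1 uv.2.

Definition wmax : R := \big[Num.max/0]_(h in H) w h.

Definition Lh (h : hedge) : R :=
  inf [set r : R | exists x y, x \in h.1 /\ y \in h.2 /\ r = dist x y].

Definition Gamma_in (v : V) : {set V} :=
  [set z | [exists h in H, (v \in h.2) && (z \in h.1)]].
Definition Gamma_out (v : V) : {set V} :=
  [set z | [exists h in H, (v \in h.1) && (z \in h.2)]].

Definition mu_x (n : nat) (a : R) (x z : V) : R :=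
  if z == x then a / n%:R
  else if z \in Gamma_in x then
    (1 - a) * \sum_(h' in H | (x \in h'.2) && (z \in h'.1))
       (1 / (n%:R * #|h'.1|%:R)) *
       (w h' / \sum_(h'' in H | x \in h''.2) w h'')
  else 0.

Definition mu_y (m : nat) (a : R) (y z : V) : R :=
  if z == y then a / m%:R
  else if z \in Gamma_out y then
    (1 - a) * \sum_(h' in H | (y \in h'.1) && (z \in h'.2))
       (1 / (m%:R * #|h'.2|%:R)) *
       (w h' / \sum_(h'' in H | y \in h''.1) w h'')
  else 0.

Definition mu_A (h : hedge) (a : R) (z : V) : R :=
  \sum_(x in h.1) mu_x #|h.1| a x z.
Definition mu_B (h : hedge) (a : R) (z : V) : R :=
  \sum_(y in h.2) mu_y #|h.2| a y z.

(* vertex measures (Gamma = Gamma_out) *)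
Definition mu_in (a : R) (u z : V) : R :=
  if z == u then a
  else if z \in Gamma_out u then
    (1 - a) * \sum_(h' in H | (u \in h'.2) && (z \in h'.1))
       (1 / #|h'.1|%:R) * (w h' / \sum_(h'' in H | u \in h''.2) w h'')
  else 0.

Definition mu_out (a : R) (v z : V) : R :=
  if z == v then a
  else if z \in Gamma_out v then
    (1 - a) * \sum_(h' in H | (v \in h'.1) && (z \in h'.2))
       (1 / #|h'.2|%:R) * (w h' / \sum_(h'' in H | v \in h''.1) w h'')
  else 0.

Definition is_coupling (mu nu : V -> R) (pi : V -> V -> R) : Prop :=
  [/\ forall x y, 0 <= pi x y,
      forall x, \sum_(y : V) pi x y = mu x &
      forall y, \sum_(x : V) pi x y = nu y].

Definition W1 (mu nu : V -> R) : R :=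
  inf [set c : R | exists pi, is_coupling mu nu pi /\
                   c = \sum_(x : V) \sum_(y : V) pi x y * dist x y].

Definition kappa_h (h : hedge) (a : R) : R :=
  1 - W1 (mu_A h a) (mu_B h a) / Lh h.

Definition kappa_uv (u v : V) (a : R) : R :=
  1 - W1 (mu_in a u) (mu_out a v) / dist u v.

End WOH.

(* Main.v *)
Require Import Defs.
From HB Require Import structures.
From mathcomp Require Import all_boot all_order all_algebra.
From mathcomp Require Import all_classical all_reals all_analysis.
From mathcomp Require Import ring lra.
Import Order.TTheory GRing.Theory Num.Theory numFieldNormedType.Exports.
Local Open Scope classical_set_scope.
Local Open Scope ring_scope.

Section Basics.
Variables (R : realType) (V : finType) (H : {set hedge V}) (w : hedge V -> R).
Hypothesis woh : is_woh H w.

Lemma w_gt0 {h} : h \in H -> 0 < w h.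
Proof. by move=> /woh [_ _ _ []]. Qed.
Lemma swap_in {h} : h \in H -> (h.2, h.1) \in H.
Proof. by move=> /woh [_ _ _ []]. Qed.
Lemma w_swap {h} : h \in H -> w (h.2, h.1) = w h.
Proof. by move=> /woh [_ _ _ []]. Qed.
Lemma disj {h x} : h \in H -> x \in h.1 -> x \in h.2 -> False.
Proof.
move=> /woh [_ _ /eqP e _] x1 x2.
have : x \in h.1 :&: h.2 by rewrite inE x1 x2.
by rewrite e inE.
Qed.

Lemma wmax_ge {h} : h \in H -> w h <= wmax H w.
Proof. by move=> hH; rewrite /wmax; apply: (le_bigmax_cond _ (fun h => w h) hH). Qed.
Lemma wmax_ge0 : 0 <= wmax H w.
Proof. exact: bigmax_ge_id. Qed.

Lemma psum_ge0 {p : seq (hedge V)} : all (fun h => h \in H) p -> 0 <= \sum_(h <- p) w h.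
Proof.
move=> /allP ap; rewrite big_seq; apply: sumr_ge0 => h hp.
exact/ltW/w_gt0/ap.
Qed.

Lemma dpath_all {u v p} : is_dpath H u v p -> all (fun h => h \in H) p.
Proof. by case: p => //= h t /and4P[]. Qed.

Definition Pset u v := [set x : R | exists p, is_dpath H u v p /\ x = \sum_(h <- p) w h].

Lemma Pset_lb u v : lbound (Pset u v) 0.
Proof. by move=> x [p [/dpath_all hp ->]]; apply: psum_ge0. Qed.

Lemma dist_ge0 u v : 0 <= dist H w u v.
Proof.
rewrite /dist; case: ifP => // _.
case: (pselect (Pset u v !=set0)) => [ne|e].
  exact: lb_le_inf ne (@Pset_lb u v).
rewrite (_ : [set _ | _] = set0) ?inf0 //.
apply/seteqP; split => x // Sx; apply: e; by exists x.
Qed.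

Lemma dist_xx u : dist H w u u = 0.
Proof. by rewrite /dist eqxx. Qed.

Lemma dist_le_path u v p : is_dpath H u v p -> dist H w u v <= \sum_(h <- p) w h.
Proof.
move=> dp; rewrite /dist; case: ifP => _.
  exact: psum_ge0 (dpath_all dp).
apply: (ge_inf (E := Pset u v)); first by exists 0; apply: Pset_lb.
by exists p.
Qed.

Lemma dist_edge {h x y} : h \in H -> x \in h.1 -> y \in h.2 -> dist H w x y <= w h.
Proof.
move=> hH xh yh.
have -> : w h = \sum_(g <- [:: h]) w g by rewrite big_seq1.
by apply: dist_le_path; rewrite /is_dpath /= hH xh yh.
Qed.

Lemma dpath_cat {x y z p q} : is_dpath H x y p -> is_dpath H y z q -> is_dpath H x z (p ++ q).
Proof.
case: p => // h0 t; case: q => // g0 s /= /and4P[a1 x1 y1 p1] /and4P[a2 y2 z2 p2].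
apply/and4P; split => //.
- move: a1 a2 => /= /andP[-> a1] /andP[g0H a2]; by rewrite all_cat a1 /= g0H a2.
- by rewrite last_cat.
- rewrite cat_path p1 /= p2 andbT.
  rewrite /link; apply/set0Pn; exists y; by rewrite inE y1 y2.
Qed.

Lemma dist_triangle x y z : strongly_connected H ->
  dist H w x z <= dist H w x y + dist H w y z.
Proof.
move=> sc.
have [->|xz] := eqVneq x z; first by rewrite dist_xx addr_ge0 ?dist_ge0.
have [<-|xy] := eqVneq x y; first by rewrite dist_xx add0r.
have [<-|yz] := eqVneq y z; first by rewrite dist_xx addr0.
have key : forall p q, is_dpath H x y p -> is_dpath H y z q ->
    dist H w x z <= \sum_(h <- p) w h + \sum_(h <- q) w h.
  by move=> p q dp dq; rewrite -big_cat; apply/dist_le_path/(dpath_cat dp dq).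
have nexy : Pset x y !=set0.
  by have [p dp] := sc _ _ xy; exists (\sum_(h <- p) w h); exists p.
have neyz : Pset y z !=set0.
  by have [p dp] := sc _ _ yz; exists (\sum_(h <- p) w h); exists p.
have dyz : dist H w y z = inf (Pset y z) by rewrite /dist (negbTE yz).
have dxy : dist H w x y = inf (Pset x y) by rewrite /dist (negbTE xy).
rewrite -lerBlDl dyz; apply: lb_le_inf neyz _ => _ [q [dq ->]].
rewrite lerBlDl -lerBlDr dxy; apply: lb_le_inf nexy _ => _ [p [dp ->]].
by rewrite lerBlDr; apply: key.
Qed.

Lemma dist_near u v e : strongly_connected H -> u != v -> 0 < e ->
  exists2 p, is_dpath H u v p & \sum_(h <- p) w h < dist H w u v + e.
Proof.
move=> sc uv e0.
have ne : Pset u v !=set0.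
  by have [p dp] := sc _ _ uv; exists (\sum_(h <- p) w h); exists p.
have [x [p [dp ->]] lt] := inf_adherent e0 (conj ne (ex_intro _ 0 (@Pset_lb u v))).
by exists p => //; rewrite /dist (negbTE uv).
Qed.



Lemma Emu_ub {mu f : V -> R} {x M} : (forall z, 0 <= mu z) ->
  (forall z, z != x -> mu z != 0 -> f z <= M) ->
  \sum_z mu z * f z <= mu x * f x + (\sum_z mu z - mu x) * M.
Proof.
move=> m0 hf.
have e1 : \sum_z mu z = mu x + \sum_(z | z != x) mu z by rewrite (bigD1 x).
rewrite e1 (addrC (mu x)) addrK (bigD1 x) //=.
rewrite lerD2l mulr_suml; apply: ler_sum => z zx.
have [->|mz] := eqVneq (mu z) 0; first by rewrite !mul0r.
by apply: ler_wpM2l => //; apply: hf.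
Qed.

Lemma Emu_lb {mu f : V -> R} {x m} : (forall z, 0 <= mu z) ->
  (forall z, z != x -> mu z != 0 -> m <= f z) ->
  mu x * f x + (\sum_z mu z - mu x) * m <= \sum_z mu z * f z.
Proof.
move=> m0 hf.
have e1 : \sum_z mu z = mu x + \sum_(z | z != x) mu z by rewrite (bigD1 x).
rewrite e1 (addrC (mu x)) addrK [X in _ <= X](bigD1 x) //=.
rewrite lerD2l mulr_suml; apply: ler_sum => z zx.
have [->|mz] := eqVneq (mu z) 0; first by rewrite !mul0r.
by apply: ler_wpM2l => //; apply: hf.
Qed.

Definition gm (x : V) (c a : R) (G : {set V}) (P : pred (hedge V))
  (sel : hedge V -> {set V}) (k : hedge V -> R) (z : V) : R :=
  if z == x then c else if z \in G then
    (1 - a) * \sum_(h' in H | P h' && (z \in sel h')) k h' * (w h' / \sum_(h'' in H | P h'') w h'')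
  else 0.

Section GM.
Variables (x : V) (c a : R) (G : {set V}) (P : pred (hedge V))
  (sel : hedge V -> {set V}) (k : hedge V -> R).
Hypothesis hx : forall h, h \in H -> P h -> x \notin sel h.
Hypothesis hG : forall h z, h \in H -> P h -> z \in sel h -> z \in G.
Let S := \sum_(h'' in H | P h'') w h''.
Let inner z := \sum_(h' in H | P h' && (z \in sel h')) k h' * (w h' / S).

Lemma gm_form z : gm x c a G P sel k z = (if z == x then c else 0) + (1 - a) * inner z.
Proof.
rewrite /gm; have [->|zx] := eqVneq z x.
  rewrite (_ : inner x = 0) ?mulr0 ?addr0 //; apply: big1 => h /andP[hH /andP[Ph xs]].
  by move: (hx h hH Ph); rewrite xs.
rewrite add0r; case: ifP => // zG.
rewrite (_ : inner z = 0) ?mulr0 //; apply: big1 => h /andP[hH /andP[Ph zs]].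
by move: (hG h z hH Ph zs); rewrite zG.
Qed.

Lemma gm_x : gm x c a G P sel k x = c.
Proof. by rewrite /gm eqxx. Qed.

Lemma gm_ge0 z : 0 <= c -> a <= 1 -> (forall h, h \in H -> 0 <= k h) ->
  0 <= gm x c a G P sel k z.
Proof.
move=> c0 a1 k0; rewrite gm_form; apply: addr_ge0; first by case: ifP.
apply: mulr_ge0; first by rewrite subr_ge0.
apply: sumr_ge0 => h /andP[hH _]; apply: mulr_ge0; first exact: k0.
apply: divr_ge0; first exact/ltW/w_gt0.
by apply: sumr_ge0 => g /andP[gH _]; apply/ltW/w_gt0.
Qed.

Lemma gm_supp z : z != x -> gm x c a G P sel k z != 0 ->
  exists2 h, h \in H & P h && (z \in sel h).
Proof.
move=> zx; rewrite gm_form (negbTE zx) add0r.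
case: (pselect (exists2 h, h \in H & P h && (z \in sel h))) => // nex.
rewrite (_ : inner z = 0) ?mulr0 ?eqxx //; apply: big1 => h /andP[hH Pz].
by exfalso; apply: nex; exists h.
Qed.

Lemma gm_mass t : S != 0 -> (forall h, h \in H -> P h -> #|sel h|%:R * k h = t) ->
  \sum_z gm x c a G P sel k z = c + (1 - a) * t.
Proof.
move=> S0 kt.
under eq_bigr do rewrite gm_form.
rewrite big_split /= -big_mkcond /= big_pred1_eq -mulr_sumr; congr (_ + (_ * _)).
have ei : forall z, inner z =
    \sum_(h | (h \in H) && P h) (if z \in sel h then k h * (w h / S) else 0).
  by move=> z; rewrite /inner -big_mkcondr; apply: eq_bigl => h; rewrite andbA.
under eq_bigr do rewrite ei.
rewrite exchange_big /=.
transitivity (\sum_(h in H | P h) t * (w h / S)).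
  apply: eq_bigr => h /andP[hH Ph].
  rewrite -big_mkcond /= sumr_const -mulr_natl mulrA kt //.
by rewrite -mulr_sumr -mulr_suml -/S divff ?mulr1.
Qed.

End GM.


Lemma mu_x_gm n a x z : mu_x H w n a x z = gm x (a / n%:R) a (Gamma_in H x)
  (fun h => x \in h.2) (fun h => h.1) (fun h => 1 / (n%:R * #|h.1|%:R)) z.
Proof. by []. Qed.
Lemma mu_y_gm m a y z : mu_y H w m a y z = gm y (a / m%:R) a (Gamma_out H y)
  (fun h => y \in h.1) (fun h => h.2) (fun h => 1 / (m%:R * #|h.2|%:R)) z.
Proof. by []. Qed.
Lemma mu_out_gm a v z : mu_out H w a v z = gm v a a (Gamma_out H v)
  (fun h => v \in h.1) (fun h => h.2) (fun h => 1 / #|h.2|%:R) z.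
Proof. by []. Qed.

Definition swp (h : hedge V) : hedge V := (h.2, h.1).
Lemma swp_inj : injective swp.
Proof. by move=> [a b] [c d] /= [-> ->]. Qed.
Lemma swp_in h : (swp h \in H) = (h \in H).
Proof.
apply/idP/idP => hh.
  by have := swap_in hh; case: h hh.
exact: swap_in hh.
Qed.

Lemma mu_in_out a u z : mu_in H w a u z = mu_out H w a u z.
Proof.
rewrite /mu_in /mu_out; case: eqP => // _; case: ifP => // _; congr (_ * _).
have eS : \sum_(h'' in H | u \in h''.2) w h'' = \sum_(h'' in H | u \in h''.1) w h''.
  rewrite (reindex_inj swp_inj) /=; apply: eq_big => [h|h /andP[hH _]].
    by rewrite swp_in.
  by rewrite swp_in in hH; exact: w_swap hH.
rewrite eS (reindex_inj swp_inj) /=; apply: eq_big => [h|h /andP[hH _]].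
  by rewrite swp_in.
by rewrite swp_in in hH; rewrite /swp /= (w_swap hH).
Qed.

Lemma W1_ge {mu nu f : V -> R} : (exists pi, is_coupling mu nu pi) ->
  (forall x y, f y - f x <= dist H w x y) ->
  \sum_y nu y * f y - \sum_x mu x * f x <= W1 H w mu nu.
Proof.
move=> [pi cpi] lip; apply: lb_le_inf.
  by exists (\sum_x \sum_y pi x y * dist H w x y); exists pi.
move=> _ [p [[p0 pm pn] ->]].
apply: (@le_trans _ _ (\sum_x \sum_y p x y * (f y - f x))); last first.
  apply: ler_sum => x _; apply: ler_sum => y _; exact: ler_wpM2l.
have e : \sum_x \sum_y p x y * (f y - f x) =
    \sum_x \sum_y p x y * f y - \sum_x \sum_y p x y * f x.
  rewrite -sumrB; apply: eq_bigr => x _; rewrite -sumrB; apply: eq_bigr => y _.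
  by rewrite mulrBr.
have e2 : \sum_x \sum_y p x y * f y = \sum_y nu y * f y.
  rewrite exchange_big /=; apply: eq_bigr => y _; by rewrite -mulr_suml pn.
have e3 : \sum_x \sum_y p x y * f x = \sum_x mu x * f x.
  by apply: eq_bigr => x _; rewrite -mulr_suml pm.
by rewrite e e2 e3.
Qed.

Lemma W1_coupling {mu nu} : W1 H w mu nu != 0 -> exists pi, is_coupling mu nu pi.
Proof.
rewrite /W1; case: (pselect (exists pi, is_coupling mu nu pi)) => // np.
rewrite (_ : [set _ | _] = set0) ?inf0 ?eqxx //.
apply/seteqP; split => c // [pi [cp _]]; apply: np; by exists pi.
Qed.

Lemma ne1_nz (p q : R) : 1 - p / q != 1 -> p != 0 /\ q != 0.
Proof.
move=> h; split; apply/eqP => e; move: h; rewrite e.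
  by rewrite mul0r subr0 eqxx.
by rewrite invr0 mulr0 subr0 eqxx.
Qed.

Lemma S_pos {P : pred (hedge V)} {h0} : h0 \in H -> P h0 ->
  0 < \sum_(h in H | P h) w h.
Proof.
move=> h0H Ph0; rewrite (bigD1 h0) /=; last by rewrite h0H.
apply: (lt_le_trans (w_gt0 h0H)); rewrite lerDl.
by apply: sumr_ge0 => h /andP[/andP[hH _] _]; apply/ltW/w_gt0.
Qed.

Lemma card_neq0 {h} : h \in H -> (#|h.1|%:R != 0 :> R) /\ (#|h.2|%:R != 0 :> R).
Proof.
move=> /woh [n1 n2 _ _]; rewrite !pnatr_eq0 -!lt0n !card_gt0; by split.
Qed.

Section SC.
Hypothesis sc : strongly_connected H.
Hypothesis V2 : (1 < #|V|)%N.

Lemma has_out x : exists2 h, h \in H & x \in h.1.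
Proof.
have [y xy] : exists y, x != y.
  move/card_gt1P: V2 => [a [b [_ _ ab]]].
  have [->|xa] := eqVneq x a; first by exists b.
  by exists a.
have [[|h0 t] //] := sc _ _ xy.
by move=> /and4P[/andP[h0H _] x0 _ _]; exists h0.
Qed.

Lemma has_in x : exists2 h, h \in H & x \in h.2.
Proof. by have [h hH xh] := has_out x; exists (swp h); rewrite ?swp_in. Qed.

Lemma mass_out a v : \sum_z mu_out H w a v z = 1.
Proof.
under eq_bigr do rewrite mu_out_gm.
have [h0 h0H vh0] := has_out v.
rewrite (@gm_mass _ _ _ _ _ _ _ _ _ 1).
- by rewrite mulr1 addrC subrK.
- by move=> h hH vh; apply/negP => /(disj hH vh).
- by move=> h z hH vh zh; rewrite inE; apply/existsP; exists h; rewrite hH vh zh.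
- by rewrite gt_eqF // (S_pos h0H).
- by move=> h hH _; rewrite div1r divff //; case: (card_neq0 hH).
Qed.

Lemma out_ge0 a v z : 0 <= a <= 1 -> 0 <= mu_out H w a v z.
Proof.
move=> /andP[a0 a1]; rewrite mu_out_gm; apply: gm_ge0 => //.
- by move=> h hH vh; apply/negP => /(disj hH vh).
- by move=> h z' hH vh zh; rewrite inE; apply/existsP; exists h; rewrite hH vh zh.
Qed.

Lemma out_supp {a v z} : z != v -> mu_out H w a v z != 0 ->
  exists2 h, h \in H & (v \in h.1) && (z \in h.2).
Proof.
rewrite mu_out_gm; apply: gm_supp.
  by move=> h hH vh; apply/negP => /(disj hH vh).
by move=> h z' hH vh zh; rewrite inE; apply/existsP; exists h; rewrite hH vh zh.
Qed.




Definition phi u a x := \sum_z mu_out H w a x z * dist H w u z.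

Lemma phi_step a u x y : (exists pi, is_coupling (mu_in H w a x) (mu_out H w a y) pi) ->
  phi u a y - phi u a x <= W1 H w (mu_in H w a x) (mu_out H w a y).
Proof.
move=> cp.
have lip : forall x y, dist H w u y - dist H w u x <= dist H w x y.
  by move=> x' y'; have := dist_triangle u x' y' sc; lra.
have := W1_ge cp lip.
have -> : \sum_x0 mu_in H w a x x0 * dist H w u x0 = phi u a x.
  by apply: eq_bigr => z _; rewrite mu_in_out.
by [].
Qed.

Lemma mu_out_cen a v : mu_out H w a v v = a.
Proof. by rewrite /mu_out eqxx. Qed.

Lemma phi_u a u : 0 <= a <= 1 -> phi u a u <= (1 - a) * wmax H w.
Proof.
move=> a01; rewrite /phi.
apply: le_trans (Emu_ub (M := wmax H w) (x := u) _ _) _.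
- by move=> z; apply: out_ge0.
- move=> z zu mz; have [h hH /andP[uh zh]] := out_supp zu mz.
  exact: le_trans (dist_edge hH uh zh) (wmax_ge hH).
by rewrite mu_out_cen dist_xx mulr0 add0r mass_out.
Qed.

Lemma phi_v a u v : 0 <= a <= 1 -> dist H w u v - (1 - a) * wmax H w <= phi u a v.
Proof.
move=> a01; rewrite /phi.
apply: le_trans (Emu_lb (m := dist H w u v - wmax H w) (x := v) _ _).
  by rewrite mu_out_cen mass_out; rewrite le_eqVlt; apply/orP; left; apply/eqP; ring.
- by move=> z; apply: out_ge0.
- move=> z zv mz; have [h hH /andP[vh zh]] := out_supp zv mz.
  have hs : swp h \in H by rewrite swp_in.
  have e1 := le_trans (dist_edge hs zh vh) (wmax_ge hs).
  have := dist_triangle u z v sc; lra.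
Qed.

Lemma chain {F : V -> R} {c} :
  (forall h x y, h \in H -> x \in h.1 -> y \in h.2 -> F y - F x <= c * w h) ->
  forall u v p, is_dpath H u v p -> F v - F u <= c * \sum_(h <- p) w h.
Proof.
move=> st u v [|h0 t] //; elim: t h0 u => [|h1 t IH] h0 u.
  rewrite /is_dpath /= => /and4P[/andP[h0H _] uh vh _]; rewrite big_seq1.
  exact: st.
move=> /and4P[/andP[h0H a1] uh vl /andP[lk pt]].
move/set0Pn: lk => [m]; rewrite inE => /andP[m0 m1].
have dp : is_dpath H m v (h1 :: t) by apply/and4P; split.
have IH' := IH h1 m dp.
have := st _ _ _ h0H uh m0.
rewrite big_cons mulrDr; lra.
Qed.




Lemma diam_step (a kd : R) u v : 0 <= a -> 0 < 1 - a -> 0 < 1 - kd * (1 - a) ->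
  (forall h x y, h \in H -> x \in h.1 -> y \in h.2 ->
     kappa_uv H w x y a != 1 /\ kd * (1 - a) <= kappa_uv H w x y a) ->
  u != v -> kd * dist H w u v <= 2 * wmax H w.
Proof.
move=> a0 a1 c0 hyp uv.
have a01 : 0 <= a <= 1 by apply/andP; split => //; lra.
set c := 1 - kd * (1 - a).
have st : forall h x y, h \in H -> x \in h.1 -> y \in h.2 ->
    phi u a y - phi u a x <= c * w h.
  move=> h x y hH xh yh; have [k1 kb] := hyp _ _ _ hH xh yh.
  move: (k1); rewrite /kappa_uv => /ne1_nz [W0 d0].
  have cp := W1_coupling W0.
  apply: le_trans (phi_step _ _ _ _ cp) _.
  have eW : W1 H w (mu_in H w a x) (mu_out H w a y) =
      (1 - kappa_uv H w x y a) * dist H w x y.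
    by rewrite /kappa_uv; field.
  rewrite eW.
  have dd := dist_ge0 x y; have de := dist_edge hH xh yh.
  have k2 : 1 - kappa_uv H w x y a <= c by rewrite /c; lra.
  apply: le_trans (ler_wpM2r dd k2) _.
  by apply: ler_wpM2l => //; apply: ltW.
have key : forall p, is_dpath H u v p ->
    dist H w u v - 2 * (1 - a) * wmax H w <= c * \sum_(h <- p) w h.
  move=> p dp; have := chain st _ _ _ dp; have := phi_u a u a01; have := phi_v a u v a01; lra.
have dI : dist H w u v = inf (Pset u v) by rewrite /dist (negbTE uv).
have ne : Pset u v !=set0.
  by have [p dp] := sc _ _ uv; exists (\sum_(h <- p) w h); exists p.
have lb : (dist H w u v - 2 * (1 - a) * wmax H w) / c <= dist H w u v.
  rewrite [X in _ <= X]dI; apply: lb_le_inf ne _ => _ [p [dp ->]].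
  by rewrite ler_pdivrMr // [_ * c]mulrC; exact: key.
move: lb; rewrite ler_pdivrMr // /c => lb.
have : (kd * dist H w u v) * (1 - a) <= (2 * wmax H w) * (1 - a) by nra.
by rewrite ler_pM2r.
Qed.




Lemma x_hG x : forall h z, h \in H -> x \in h.2 -> z \in h.1 -> z \in Gamma_in H x.
Proof. by move=> h z hH xh zh; rewrite inE; apply/existsP; exists h; rewrite hH xh zh. Qed.
Lemma x_hx x : forall h, h \in H -> x \in h.2 -> x \notin h.1.
Proof. by move=> h hH xh; apply/negP => /disj - /(_ hH xh). Qed.
Lemma y_hG y : forall h z, h \in H -> y \in h.1 -> z \in h.2 -> z \in Gamma_out H y.
Proof. by move=> h z hH xh zh; rewrite inE; apply/existsP; exists h; rewrite hH xh zh. Qed.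
Lemma y_hx y : forall h, h \in H -> y \in h.1 -> y \notin h.2.
Proof. by move=> h hH yh; apply/negP => /(disj hH yh). Qed.

Lemma mass_x n a x g : (n != 0)%N -> g \in H -> x \in g.2 ->
  \sum_z mu_x H w n a x z = a / n%:R + (1 - a) * (1 / n%:R).
Proof.
move=> n0 gH xg.
under eq_bigr do rewrite mu_x_gm.
rewrite (@gm_mass _ _ _ _ _ _ _ (@x_hx x) (@x_hG x) (1 / n%:R)) //.
- by rewrite gt_eqF // (S_pos gH).
- move=> h hH _; have [c1 _] := card_neq0 hH.
  have nn : (n%:R != 0 :> R) by rewrite pnatr_eq0.
  by field; apply/andP.
Qed.

Lemma mass_y n a y g : (n != 0)%N -> g \in H -> y \in g.1 ->
  \sum_z mu_y H w n a y z = a / n%:R + (1 - a) * (1 / n%:R).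
Proof.
move=> n0 gH xg.
under eq_bigr do rewrite mu_y_gm.
rewrite (@gm_mass _ _ _ _ _ _ _ (@y_hx y) (@y_hG y) (1 / n%:R)) //.
- by rewrite gt_eqF // (S_pos gH).
- move=> h hH _; have [_ c1] := card_neq0 hH.
  have nn : (n%:R != 0 :> R) by rewrite pnatr_eq0.
  by field; apply/andP.
Qed.

Lemma x_ge0 n a x z : 0 <= a <= 1 -> 0 <= mu_x H w n a x z.
Proof.
move=> /andP[a0 a1]; rewrite mu_x_gm; apply: gm_ge0 => //;
  by [exact: x_hx | exact: x_hG | rewrite divr_ge0 | move=> h _; rewrite divr_ge0 // mulr_ge0].
Qed.

Lemma y_ge0 n a y z : 0 <= a <= 1 -> 0 <= mu_y H w n a y z.
Proof.
move=> /andP[a0 a1]; rewrite mu_y_gm; apply: gm_ge0 => //;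
  by [exact: y_hx | exact: y_hG | rewrite divr_ge0 | move=> h _; rewrite divr_ge0 // mulr_ge0].
Qed.

Lemma x_supp {n a x z} : z != x -> mu_x H w n a x z != 0 ->
  exists2 h, h \in H & (x \in h.2) && (z \in h.1).
Proof. rewrite mu_x_gm; apply: gm_supp; [exact: x_hx | exact: x_hG]. Qed.
Lemma y_supp {n a y z} : z != y -> mu_y H w n a y z != 0 ->
  exists2 h, h \in H & (y \in h.1) && (z \in h.2).
Proof. rewrite mu_y_gm; apply: gm_supp; [exact: y_hx | exact: y_hG]. Qed.




Lemma Lh_le (h : hedge V) x y : x \in h.1 -> y \in h.2 -> Lh H w h <= dist H w x y.
Proof.
move=> xh yh; rewrite /Lh; apply: ge_inf.
  by exists 0 => _ [x' [y' [_ [_ ->]]]]; exact: dist_ge0.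
by exists x, y.
Qed.

Lemma edge_step (h : hedge V) (a : R) : h \in H -> 0 <= a <= 1 ->
  (exists pi, is_coupling (mu_A H w h a) (mu_B H w h a) pi) ->
  Lh H w h - 2 * (1 - a) * wmax H w <= W1 H w (mu_A H w h a) (mu_B H w h a).
Proof.
move=> hH a01 cp.
have [n1 n2 _ _] := woh _ hH.
have /set0Pn [x0 x0A] := n1.
have nn : #|h.1| != 0%N by rewrite -lt0n card_gt0.
have mm : #|h.2| != 0%N by rewrite -lt0n card_gt0.
have nR : (#|h.1|%:R != 0 :> R) by rewrite pnatr_eq0.
have mR : (#|h.2|%:R != 0 :> R) by rewrite pnatr_eq0.
have hs : swp h \in H by rewrite swp_in.
have W0 := wmax_ge0.
pose f z := \big[Order.min/dist H w x0 z]_(x in h.1) dist H w x z.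
have fle : forall x z, x \in h.1 -> f z <= dist H w x z.
  by move=> x z xA; exact: bigmin_le_cond.
have lip : forall z y, f y - f z <= dist H w z y.
  move=> z y; suff : f y - dist H w z y <= f z by lra.
  apply: le_bigmin => [|x xA].
    by have := fle _ y x0A; have := dist_triangle x0 z y sc; lra.
  by have := fle _ y xA; have := dist_triangle x z y sc; lra.
have LB := W1_ge cp lip.
have EA : \sum_z mu_A H w h a z * f z <= (1 - a) * wmax H w.
  have e : \sum_z mu_A H w h a z * f z =
      \sum_(x in h.1) \sum_z mu_x H w #|h.1| a x z * f z.
    transitivity (\sum_z \sum_(x in h.1) mu_x H w #|h.1| a x z * f z).
      by apply: eq_bigr => z _; rewrite /mu_A mulr_suml.
    by rewrite exchange_big.
  rewrite e.
  apply: le_trans (_ : _ <= \sum_(x in h.1) ((1 - a) / #|h.1|%:R * wmax H w)) _.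
    apply: ler_sum => x xA.
    apply: le_trans (_ : _ <= \sum_z mu_x H w #|h.1| a x z * dist H w x z) _.
      by apply: ler_sum => z _; apply: ler_wpM2l; [exact: x_ge0 | exact: fle].
    apply: le_trans (Emu_ub (x := x) (M := wmax H w) _ _) _.
    - by move=> z; apply: x_ge0.
    - move=> z zx mz; have [g' g'H /andP[xg' zg']] := x_supp zx mz.
      have gs : swp g' \in H by rewrite swp_in.
      exact: le_trans (dist_edge gs xg' zg') (wmax_ge gs).
    rewrite dist_xx mulr0 add0r (mass_x _ _ _ _ nn hs xA) /mu_x eqxx.
    by rewrite le_eqVlt; apply/orP; left; apply/eqP; field.
  rewrite sumr_const -mulr_natr.
  by rewrite le_eqVlt; apply/orP; left; apply/eqP; field.
have EB : Lh H w h - (1 - a) * wmax H w <= \sum_z mu_B H w h a z * f z.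
  have e : \sum_z mu_B H w h a z * f z =
      \sum_(y in h.2) \sum_z mu_y H w #|h.2| a y z * f z.
    transitivity (\sum_z \sum_(y in h.2) mu_y H w #|h.2| a y z * f z).
      by apply: eq_bigr => z _; rewrite /mu_B mulr_suml.
    by rewrite exchange_big.
  rewrite e.
  apply: le_trans (_ : _ <= \sum_(y in h.2)
     (Lh H w h / #|h.2|%:R - (1 - a) / #|h.2|%:R * wmax H w)) _.
    rewrite sumr_const -mulr_natr.
    by rewrite le_eqVlt; apply/orP; left; apply/eqP; field.
  apply: ler_sum => y yB.
  have fy : Lh H w h <= f y.
    apply: le_bigmin => [|x xA]; exact: Lh_le.
  apply: le_trans _ (Emu_lb (x := y) (m := Lh H w h - wmax H w) _ _).
  - rewrite (mass_y _ _ _ _ mm hs yB) /mu_y eqxx.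
    have aa : 0 <= a / #|h.2|%:R by rewrite divr_ge0 //; case/andP: a01.
    have := ler_wpM2l aa fy.
    have e1 : (a / #|h.2|%:R + (1 - a) * (1 / #|h.2|%:R) - a / #|h.2|%:R) =
       (1 - a) / #|h.2|%:R by field.
    have e2 : Lh H w h / #|h.2|%:R - (1 - a) / #|h.2|%:R * wmax H w =
       a / #|h.2|%:R * Lh H w h + (1 - a) / #|h.2|%:R * (Lh H w h - wmax H w) by field.
    rewrite e1 e2; lra.
  - by move=> z; apply: y_ge0.
  - move=> z zy mz; have [g' g'H /andP[yg' zg']] := y_supp zy mz.
    have gs : swp g' \in H by rewrite swp_in.
    have := le_trans (dist_edge gs zg' yg') (wmax_ge gs).
    have := lip z y; lra.
lra.
Qed.

End SC.
End Basics.

Section Filt.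
Context {R : realType}.
Lemma near_and {P Q : R -> Prop} : (\forall a \near (1:R)^'-, P a) ->
  (\forall a \near (1:R)^'-, Q a) -> \forall a \near (1:R)^'-, P a /\ Q a.
Proof. move=> hP hQ; exact: (@filterI _ _ (at_left_proper_filter 1) _ _ hP hQ). Qed.
Lemma near_mono {P Q : R -> Prop} : (forall a, P a -> Q a) ->
  (\forall a \near (1:R)^'-, P a) -> \forall a \near (1:R)^'-, Q a.
Proof. move=> PQ; exact: (@filterS _ _ (at_left_proper_filter 1)). Qed.
Lemma near_ex {P : R -> Prop} : (\forall a \near (1:R)^'-, P a) -> exists a, P a.
Proof. move=> hP; exact: (@filter_ex _ _ (at_left_proper_filter 1) _ hP). Qed.
Lemma near_all {P : R -> Prop} : (forall a, P a) -> \forall a \near (1:R)^'-, P a.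
Proof. move=> hP; exact: (@nearW _ _ _ (at_left_proper_filter 1) hP). Qed.

Lemma near_lt {g : R -> R} {k : R} z : g a @[a --> (1:R)^'-] --> k -> k < z ->
  \forall a \near (1:R)^'-, g a < z.
Proof. move=> cv kz; exact: (@cvgr_lt _ _ _ (at_left_proper_filter 1) _ _ cv _ kz). Qed.
Lemma near_gt {g : R -> R} {k : R} z : g a @[a --> (1:R)^'-] --> k -> z < k ->
  \forall a \near (1:R)^'-, z < g a.
Proof. move=> cv kz; exact: (@cvgr_gt _ _ _ (at_left_proper_filter 1) _ _ cv _ kz). Qed.

Lemma near_forall {I : finType} {P : I -> R -> Prop} :
  (forall i, \forall a \near (1:R)^'-, P i a) -> \forall a \near (1:R)^'-, forall i, P i a.
Proof. move=> hP; exact: (@filter_forall _ _ _ _ (at_left_proper_filter 1) hP). Qed.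

Lemma near_one {M : R} : 0 < M ->
  \forall a \near (1:R)^'-, 0 < a /\ 0 < 1 - a /\ M * (1 - a) < 1.
Proof.
move=> M0.
have F1 : \forall a \near (1:R)^'-, 0 < a by apply: nbhs_left_gt; exact: ltr01.
have F2 : \forall a \near (1:R)^'-, a < 1 := nbhs_left_lt _.
have F3 : \forall a \near (1:R)^'-, 1 - M^-1 < a.
  by apply: nbhs_left_gt; rewrite ltrBlDr ltrDl invr_gt0.
apply: (near_mono _ (near_and F1 (near_and F2 F3))) => a [h1 [h2 h3]].
split => //; split; first lra.
have h4 : 1 - a < M^-1 by lra.
by rewrite -(ltr_pM2l M0) mulfV ?gt_eqF // in h4.
Qed.

Lemma near_ne1 (g : R -> R) (k : R) : g a / (1 - a) @[a --> (1:R)^'-] --> k ->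
  \forall a \near (1:R)^'-, g a != 1.
Proof.
move=> cv.
have kk : k < `|k| + 1 by have := ler_norm k; lra.
have G1 : \forall a \near (1:R)^'-, g a / (1 - a) < `|k| + 1 := @cvgr_lt _ _ _ (at_left_proper_filter 1) _ _ cv _ kk.
have K0 : (0:R) < `|k| + 2 by have := normr_ge0 k; lra.
have G2 := near_one K0.
apply: (near_mono _ (near_and G1 G2)) => a [ga [_ [t0 tM]]]; apply/eqP => e.
rewrite /= e ltr_pdivrMr // in ga; lra.
Qed.

End Filt.

Theorem mainTheorem8 (R : realType) (V : finType)
    (H : {set ({set V} * {set V})}) (w : {set V} * {set V} -> R) :
  is_woh H w -> strongly_connected H -> (1 < #|V|)%N ->
  (forall (h : {set V} * {set V}) (k : R), h \in H ->
     (kappa_h H w h a / (1 - a)) @[a --> 1^'-] --> k -> 0 < k ->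
     Lh H w h <= 2 * wmax H w / k) /\
  (forall kap : R, 0 < kap ->
     (forall (h : {set V} * {set V}) (u v : V), h \in H -> u \in h.1 -> v \in h.2 ->
        exists2 k : R, (kappa_uv H w u v a / (1 - a)) @[a --> 1^'-] --> k & kap <= k) ->
     diam H w <= 2 * wmax H w / kap).
Proof.
move=> woh sc V2.
have W0 := @wmax_ge0 _ _ H w.
split.
- move=> h k hH cv k0.
  case: (lerP (Lh H w h) 0) => [Lle|Lgt].
    apply: le_trans Lle _; apply: divr_ge0; last exact: ltW.
    by apply: mulr_ge0.
  suff : k <= 2 * wmax H w / Lh H w h.
    by rewrite ler_pdivlMr // => kL; rewrite ler_pdivlMr // mulrC.
  rewrite leNgt; apply/negP => kgt.
  have G1 := near_gt _ cv kgt.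
  have G2 := near_ne1 _ _ cv.
  have G3 := near_one (@ltr01 R).
  have [a [ga [n1 [a0 [t0 _]]]]] := near_ex (near_and G1 (near_and G2 G3)).
  have a01 : 0 <= a <= 1 by apply/andP; split; lra.
  have cp : exists pi, is_coupling (mu_A H w h a) (mu_B H w h a) pi.
    by move: n1; rewrite /kappa_h => /ne1_nz [Wn _]; exact: W1_coupling Wn.
  have es := @edge_step _ _ _ _ woh sc h a hH a01 cp.
  move: ga; rewrite /= ltr_pdivlMr // /kappa_h => ga.
  set W := W1 H w (mu_A H w h a) (mu_B H w h a) in es ga.
  have e1 : (Lh H w h - 2 * (1 - a) * wmax H w) / Lh H w h =
      1 - (2 * wmax H w / Lh H w h) * (1 - a).
    by field; rewrite gt_eqF.
  have : (Lh H w h - 2 * (1 - a) * wmax H w) / Lh H w h <= W / Lh H w h.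
    by rewrite ler_pM2r // invr_gt0.
  rewrite e1; lra.
- move=> kap kap0 hyp.
  rewrite /diam; apply: bigmax_le.
    by apply: divr_ge0; [apply: mulr_ge0 | exact: ltW].
  move=> [u v] _ /=.
  have [<-|uv] := eqVneq u v.
    by rewrite dist_xx; apply: divr_ge0; [apply: mulr_ge0 | exact: ltW].
  suff : kap * dist H w u v <= 2 * wmax H w.
    by move=> kd; rewrite ler_pdivlMr // mulrC.
  apply/ler_addgt0Pr => e e0.
  have d0 := @dist_ge0 _ _ H w woh u v.
  set d := dist H w u v in d0 *.
  set del := e / (d + 1).
  have del0 : 0 < del by rewrite divr_gt0 //; lra.
  have dd : del * d <= e.
    by rewrite /del mulrAC ler_pdivrMr; [nra | lra].
  suff : (kap - del) * d <= 2 * wmax H w by nra.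
  have G : \forall a \near (1:R)^'-, forall i : ({set V} * {set V}) * V * V,
      i.1.1 \in H -> i.1.2 \in i.1.1.1 -> i.2 \in i.1.1.2 ->
      kappa_uv H w i.1.2 i.2 a != 1 /\ (kap - del) * (1 - a) <= kappa_uv H w i.1.2 i.2 a.
    apply: near_forall => -[[g x] y] /=.
    case: (pselect (g \in H /\ x \in g.1 /\ y \in g.2)) => [[gH [xg yg]]|nadj]; last first.
      by apply: near_all => a gH xg yg; exfalso; apply: nadj.
    have [k cv kk] := hyp _ _ _ gH xg yg.
    have G1 := near_ne1 _ _ cv.
    have kd : kap - del < k by lra.
    have G2 := near_gt _ cv kd.
    have G3 := near_one (@ltr01 R).
    apply: (near_mono _ (near_and G1 (near_and G2 G3))) => a [n1 [ga [a0 [t0 _]]]] _ _ _.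
    split => //; move: ga; rewrite /= ltr_pdivlMr // => ga; exact: ltW.
  have [a [Ga [a0 [t0 kt]]]] := near_ex (near_and G (near_one kap0)).
  have c0 : 0 < 1 - (kap - del) * (1 - a).
    have := mulr_ge0 (ltW del0) (ltW t0); lra.
  apply: (@diam_step _ _ _ _ woh sc V2 a (kap - del) u v (ltW a0) t0 c0 _ uv).
  by move=> g x y gH xg yg; exact: (Ga (g, x, y) gH xg yg).
Qed.
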